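(* Let $(X,d)$ be a compact metric space and $\emptyset\neq F\subseteq X$ with a representation $(\tilde F_k)$ w.r.t. which $F$ is explicitly closed. Let $G,H:\mathbb{R}_+\to\mathbb{R}_+$ satisfy properties (G) and (H). Assume that the sequence $(x_n)$ in $X$ is $(G,H)$-Fej\'er monotone with respect to $F$ and has approximate $F$-points. Then $(x_n)$ converges to a point $x\in F$.
   Context: A representation of $F$ is a family $(\tilde F_k)_{k\in\mathbb{N}}$ of subsets of $X$ with $F=\bigcap_k\tilde F_k$; $AF_k:=\bigcap_{l\le k}\tilde F_l$. $(x_n)$ has approximate $F$-points if for all $k$ there is $N$ with $x_N\in AF_k$. $F$ is explicitly closed if for every $p\in X$: if $AF_M\cap\overline B(p,1/(N+1))\ne\emptyset$ for all $N,M\in\mathbb{N}$, then $p\in F$. Property (G): $a_n\to0$ implies $G(a_n)\to0$ for all sequences $(a_n)$ in $\mathbb{R}_+$; property (H): $H(a_n)\to0$ implies $a_n\to0$ for all sequences $(a_n)$ in $\mathbb{R}_+$. $(x_n)$ is $(G,H)$-Fej\'er monotone w.r.t. $F$ if $H(d(x_{n+m},p))\le G(d(x_n,p))$ for all $n,m\in\mathbb{N}$, $p\in F$. *)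

(* Defs.v *)
From Stdlib Require Import Reals Lra List.
Open Scope R_scope.

Record MetricSpace := {
  carrier :> Type;
  dist : carrier -> carrier -> R;
  dist_nonneg : forall x y, 0 <= dist x y;
  dist_eq0 : forall x y, dist x y = 0 <-> x = y;
  dist_sym : forall x y, dist x y = dist y x;
  dist_tri : forall x y z, dist x z <= dist x y + dist y z
}.

Section Metric.
Variable X : MetricSpace.

Definition is_open (U : X -> Prop) : Prop :=
  forall x, U x -> exists eps, 0 < eps /\ forall y, dist X x y < eps -> U y.

Definition compact_space : Prop :=
  forall (I : Type) (U : I -> X -> Prop),
    (forall i, is_open (U i)) -> (forall x, exists i, U i x) ->
    exists l : list I, forall x, exists i, In i l /\ U i x.

Definition cball (p : X) (r : R) (y : X) : Prop := dist X p y <= r.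

Definition representation (F : X -> Prop) (Ft : nat -> X -> Prop) : Prop :=
  forall x, F x <-> (forall k, Ft k x).

Definition AF (Ft : nat -> X -> Prop) (k : nat) (x : X) : Prop :=
  forall l, (l <= k)%nat -> Ft l x.

Definition has_approx_F_points (Ft : nat -> X -> Prop) (x : nat -> X) : Prop :=
  forall k, exists N, AF Ft k (x N).

Definition explicitly_closed (F : X -> Prop) (Ft : nat -> X -> Prop) : Prop :=
  forall p : X,
    (forall N M : nat, exists y, AF Ft M y /\ cball p (1 / (INR N + 1)) y) ->
    F p.

Definition GH_Fejer_monotone (G H : R -> R) (F : X -> Prop) (x : nat -> X) : Prop :=
  forall (n m : nat) (p : X), F p -> H (dist X (x (n + m)%nat) p) <= G (dist X (x n) p).

Definition converges_to (x : nat -> X) (a : X) : Prop :=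
  forall eps, 0 < eps -> exists N, forall n, (N <= n)%nat -> dist X (x n) a < eps.

End Metric.

(** Self-maps of R_+ (functions on R whose values on [0,oo) are in [0,oo)). *)
Definition maps_nonneg (G : R -> R) : Prop := forall t, 0 <= t -> 0 <= G t.

Definition property_G (G : R -> R) : Prop :=
  forall a : nat -> R, (forall n, 0 <= a n) ->
    Un_cv a 0 -> Un_cv (fun n => G (a n)) 0.

Definition property_H (H : R -> R) : Prop :=
  forall a : nat -> R, (forall n, 0 <= a n) ->
    Un_cv (fun n => H (a n)) 0 -> Un_cv a 0.

(* Main.v *)
Require Import Defs.
From Stdlib Require Import Reals Lra Lia List Classical IndefiniteDescription.
Open Scope R_scope.

Record bad (X : MetricSpace) (y : nat -> X) := {
  bp : X; be : R; bN : nat; be_pos : 0 < be;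
  bfar : forall k, (bN <= k)%nat -> be <= Defs.dist X (y k) bp }.

Lemma fold_max_ge (X : MetricSpace) (y : nat -> X) (l : list (bad X y)) i :
  In i l -> (bN X y i <= fold_right max 0%nat (map (bN X y) l))%nat.
Proof.
  induction l as [|a l IH]; simpl; [tauto|].
  intros [<-|Hi]; [lia|]. specialize (IH Hi). lia.
Qed.

Lemma cluster (X : MetricSpace) (y : nat -> X) : compact_space X ->
  exists p, forall eps, 0 < eps -> forall K, exists k, (K <= k)%nat /\ Defs.dist X (y k) p < eps.
Proof.
  intros Hc. apply NNPP. intros H0.
  destruct (Hc (bad X y) (fun b z => Defs.dist X (bp X y b) z < be X y b)) as [l Hl].
  - intros b z Hz. exists (be X y b - Defs.dist X (bp X y b) z). split; [lra|].
    intros w Hw. pose proof (Defs.dist_tri X (bp X y b) z w). lra.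
  - intros z. pose proof (not_ex_all_not _ _ H0 z) as H1.
    apply not_all_ex_not in H1. destruct H1 as [eps H1].
    apply imply_to_and in H1. destruct H1 as [Heps H1].
    apply not_all_ex_not in H1. destruct H1 as [K H1].
    assert (Hf : forall k, (K <= k)%nat -> eps <= Defs.dist X (y k) z).
    { intros k Hk. apply Rnot_lt_le. intros Hlt. apply H1. exists k; auto. }
    exists (Build_bad X y z eps K Heps Hf). simpl.
    assert (Defs.dist X z z = 0) by (apply Defs.dist_eq0; reflexivity). lra.
  - set (M := fold_right max 0%nat (map (bN X y) l)).
    destruct (Hl (y M)) as [i [Hi Hd]].
    pose proof (bfar X y i M (fold_max_ge X y l i Hi)).
    rewrite Defs.dist_sym in Hd. lra.
Qed.

Theorem proposition4p3 (X : MetricSpace) (F : X -> Prop) (Ft : nat -> X -> Prop)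
  (G H : R -> R) (x : nat -> X) :
  compact_space X ->
  (exists p, F p) ->
  representation X F Ft ->
  explicitly_closed X F Ft ->
  maps_nonneg G -> maps_nonneg H ->
  property_G G -> property_H H ->
  GH_Fejer_monotone X G H F x ->
  has_approx_F_points X Ft x ->
  exists a : X, F a /\ converges_to X x a.
Proof.
  intros Hc _ Hrep Hcl HGn HHn HG HH HF Happ.
  pose (Nf k := proj1_sig (constructive_indefinite_description _ (Happ k))).
  assert (HNf : forall k, AF X Ft k (x (Nf k))).
  { intros k. exact (proj2_sig (constructive_indefinite_description _ (Happ k))). }
  destruct (cluster X (fun k => x (Nf k)) Hc) as [p Hp].
  assert (Fp : F p).
  { apply Hcl. intros N M.
    assert (Hpos : 0 < 1 / (INR N + 1)).
    { pose proof (pos_INR N). apply Rdiv_lt_0_compat; lra. }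
    destruct (Hp _ Hpos M) as [k [Hk Hd]].
    exists (x (Nf k)). split.
    - intros l Hl. apply (HNf k). lia.
    - unfold cball. rewrite Defs.dist_sym. lra. }
  exists p. split; [exact Fp|].
  assert (Hex : forall j : nat, exists n, Defs.dist X (x n) p < 1 / (INR j + 1)).
  { intros j. assert (Hpos : 0 < 1 / (INR j + 1)).
    { pose proof (pos_INR j). apply Rdiv_lt_0_compat; lra. }
    destruct (Hp _ Hpos 0%nat) as [k [_ Hd]]. exists (Nf k); exact Hd. }
  pose (m j := proj1_sig (constructive_indefinite_description _ (Hex j))).
  assert (Hm : forall j, Defs.dist X (x (m j)) p < 1 / (INR j + 1)).
  { intros j. exact (proj2_sig (constructive_indefinite_description _ (Hex j))). }
  assert (Hb : Un_cv (fun j => Defs.dist X (x (m j)) p) 0).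
  { intros e He. destruct (INR_archimed e 1 He) as [n Hn].
    exists n. intros j Hj. unfold R_dist. rewrite Rminus_0_r.
    rewrite Rabs_right by apply Rle_ge, Defs.dist_nonneg.
    apply Rlt_trans with (1 / (INR j + 1)); [apply Hm|].
    apply (le_INR n j) in Hj. pose proof (pos_INR n).
    apply Rmult_lt_reg_r with (INR j + 1); [lra|].
    unfold Rdiv. rewrite Rmult_1_l, Rinv_l by lra. nra. }
  assert (Hgc := HG _ (fun j => Defs.dist_nonneg X _ _) Hb).
  assert (Hcv : Un_cv (fun n => Defs.dist X (x n) p) 0).
  { apply HH; [intros; apply Defs.dist_nonneg|].
    intros eps Heps. destruct (Hgc eps Heps) as [J HJ].
    specialize (HJ J (Nat.le_refl J)). unfold R_dist in HJ. rewrite Rminus_0_r in HJ.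
    exists (m J). intros n Hn. unfold R_dist. rewrite Rminus_0_r.
    pose proof (HHn _ (Defs.dist_nonneg X (x n) p)).
    rewrite Rabs_right by lra.
    pose proof (HF (m J) (n - m J)%nat p Fp) as Hf.
    replace (m J + (n - m J))%nat with n in Hf by lia.
    pose proof (Rle_abs (G (Defs.dist X (x (m J)) p))). lra. }
  intros eps Heps. destruct (Hcv eps Heps) as [N HN]. exists N. intros n Hn.
  specialize (HN n Hn). unfold R_dist in HN. rewrite Rminus_0_r in HN.
  rewrite Rabs_right in HN by apply Rle_ge, Defs.dist_nonneg. exact HN.
Qed.
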